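(* Let $\theta>0$, $\zeta>0$, $P>0$, $\beta=\lfloor1/\theta\rfloor$, $\alpha=1/\theta-\beta$, and $g_\ell=\zeta P\,\mathrm{sinc}(\ell/\theta)$ for $\ell\in\mathbb{Z}$. Define the interference power $$I=\frac{1}{\zeta P}\sum_{\ell\in\mathbb{Z},\,\ell\neq0}|g_\ell|^2 .$$ Then $$I=\zeta P\Big(\theta^2\big(\beta^2+2\alpha\beta+\alpha\big)-1\Big),$$ and consequently the matched-filter per-terminal capacity $\log\!\big(1+\zeta P/(N_0+I)\big)$ equals $\log\!\Big(1+\frac{\zeta P}{N_0+\zeta P(\theta^2(\beta^2+2\alpha\beta+\alpha)-1)}\Big)$. In particular $I=0$ whenever $1/\theta$ is an integer.
   Context: $\mathrm{sinc}(x)=\sin(\pi x)/(\pi x)$ with $\mathrm{sinc}(0)=1$; $\log$ is natural. $g_\ell$ is the (approximate) effective channel between terminals $\ell$ positions apart on a line with spacing $\Delta_x$ in front of a large surface, with $\theta=\lambda/(2\Delta_x)$, $\lambda$ the wavelength, $P$ the per-terminal transmit power, $N_0$ the noise power spectral density. *)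

(* Defs.v *)
From Stdlib Require Import Reals Lra ZArith.
Open Scope R_scope.

Definition sinc (x : R) : R :=
  if Req_EM_T x 0 then 1 else sin (PI * x) / (PI * x).

(* floor of a real: Int_part r = up r - 1 is the floor *)
Definition floorR (x : R) : R := IZR (Int_part x).

Definition gch (zeta P theta : R) (l : Z) : R :=
  zeta * P * sinc (IZR l / theta).

(* The series over l in Z \ {0}, enumerated as n = 1,2,... pairing l = n and l = -n:
   term n collects |g_(n+1)|^2 + |g_(-(n+1))|^2, divided by zeta P. *)
Definition interf_term (zeta P theta : R) (n : nat) : R :=
  ((Rabs (gch zeta P theta (Z.of_nat (S n)))) ^ 2
   + (Rabs (gch zeta P theta (- Z.of_nat (S n)))) ^ 2) / (zeta * P).

(* Main.v *)
Require Import Defs.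
From Stdlib Require Import Reals Lra Lia ZArith.
From Coquelicot Require Import Coquelicot.
Open Scope R_scope.

Fixpoint sumN (f : nat -> R) (N : nat) : R :=
  match N with O => 0 | S k => sumN f k + f (S k) end.

Lemma sumN_ext f g N : (forall n, (1 <= n <= N)%nat -> f n = g n) -> sumN f N = sumN g N.
Proof.
  induction N; simpl; intros H; auto.
  rewrite IHN by (intros; apply H; lia). rewrite H by lia. auto.
Qed.

Lemma sumN_plus f g N : sumN (fun n => f n + g n) N = sumN f N + sumN g N.
Proof. induction N; simpl; [lra|rewrite IHN; lra]. Qed.

Lemma sumN_scal c f N : sumN (fun n => c * f n) N = c * sumN f N.
Proof. induction N; simpl; [lra|rewrite IHN; lra]. Qed.

Lemma sumN_zero N : sumN (fun _ => 0) N = 0.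
Proof. induction N; simpl; [lra|rewrite IHN; lra]. Qed.

Lemma sum_f_R0_sumN f N : sum_f_R0 (fun n => f (S n)) N = sumN f (S N).
Proof. induction N; simpl; [lra|]. rewrite IHN. simpl. lra. Qed.

Lemma sin_nPI n : sin (INR n * PI) = 0.
Proof.
  induction n. simpl. rewrite Rmult_0_l. apply sin_0.
  rewrite S_INR. replace ((INR n + 1) * PI) with (INR n * PI + PI) by ring.
  rewrite neg_sin, IHn. lra.
Qed.

Lemma dirichlet0 x N :
  2 * sin (x/2) * (/ 2 + sumN (fun n => cos (INR n * x)) N) = sin ((INR N + /2) * x).
Proof.
  induction N.
  - simpl. replace ((0 + /2) * x) with (x/2) by field. field.
  - cbn [sumN]. rewrite S_INR.
    replace ((INR N + 1 + /2) * x) with ((INR N + 1) * x + x/2) by field.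
    rewrite sin_plus.
    assert (E: (INR N + / 2) * x = (INR N + 1) * x - x/2) by field.
    rewrite E, sin_minus in IHN.
    transitivity (2 * sin (x/2) * (/2 + sumN (fun n => cos (INR n * x)) N) + 2 * sin (x/2) * cos ((INR N + 1) * x)).
    { ring. }
    rewrite IHN. ring.
Qed.

Lemma dirichlet x N : sin (x/2) <> 0 ->
  / 2 + sumN (fun n => cos (INR n * x)) N = sin ((INR N + /2) * x) / (2 * sin (x/2)).
Proof.
  intros Hs. rewrite <- dirichlet0. field. auto.
Qed.

Lemma is_derive_sumN (u du : nat -> R -> R) N x :
  (forall n, (1 <= n)%nat -> is_derive (u n) x (du n x)) ->
  is_derive (fun y => sumN (fun n => u n y) N) x (sumN (fun n => du n x) N).
Proof.
  intros H. induction N; cbn [sumN].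
  - apply (is_derive_const 0).
  - apply (is_derive_plus (fun y => sumN (fun n => u n y) N) (u (S N))); auto.
    apply H; lia.
Qed.

Lemma lip (f df : R -> R) lo hi B :
  (forall x, lo <= x <= hi -> is_derive f x (df x)) ->
  (forall x, lo <= x <= hi -> Rabs (df x) <= B) ->
  forall y z, lo <= y <= hi -> lo <= z <= hi -> Rabs (f y - f z) <= B * Rabs (y - z).
Proof.
  intros Hd Hb y z Hy Hz.
  destruct (MVT_gen f z y df) as [c [Hc Heq]].
  - intros x Hx. apply Hd. split.
    + apply Rle_trans with (Rmin z y); [apply Rmin_glb; lra | lra].
    + apply Rle_trans with (Rmax z y); [lra | apply Rmax_lub; lra].
  - intros x Hx. apply continuity_pt_filterlim.
    apply (ex_derive_continuous f x). exists (df x). apply Hd. split.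
    + apply Rle_trans with (Rmin z y); [apply Rmin_glb; lra | lra].
    + apply Rle_trans with (Rmax z y); [lra | apply Rmax_lub; lra].
  - rewrite Heq, Rabs_mult. apply Rmult_le_compat_r; [apply Rabs_pos|].
    apply Hb. split.
    + apply Rle_trans with (Rmin z y); [apply Rmin_glb; lra | lra].
    + apply Rle_trans with (Rmax z y); [lra | apply Rmax_lub; lra].
Qed.

Lemma nat_unbounded r : exists n : nat, r < INR n.
Proof.
  destruct (archimed r) as [H _].
  destruct (Z_lt_le_dec (up r) 0) as [Hl|Hl].
  - exists 0%nat. simpl. apply IZR_lt in Hl. lra.
  - exists (Z.to_nat (up r)). rewrite INR_IZR_INZ, Z2Nat.id by lia. lra.
Qed.

Lemma sin_half_bound s x : 0 < s < 2 * PI -> Rmin s PI <= x <= Rmax s PI ->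
  sin (s/2) <= sin (x/2).
Proof.
  intros Hs Hx. pose proof PI_RGT_0 as Hpi.
  destruct (Rle_dec s PI) as [H|H].
  - rewrite Rmin_left in Hx by lra. rewrite Rmax_right in Hx by lra.
    apply sin_incr_1; lra.
  - rewrite Rmin_right in Hx by lra. rewrite Rmax_left in Hx by lra.
    apply sin_decr_1; lra.
Qed.

Section LemA.
Variable s : R.
Hypothesis Hs : 0 < s < 2 * PI.
Variable N : nat.
Let M := INR N + / 2.
Let sig := sin (s/2).
Let lo := Rmin s PI.
Let hi := Rmax s PI.

Let E x := sumN (fun n => (cos (INR n * PI) - cos (INR n * x)) / INR n ^ 2) N + (x - PI)^2/4.
Let E1 x := sumN (fun n => sin (INR n * x) / INR n) N + (x - PI)/2.
Let G x := E1 x + cos (M * x) / (M * (2 * sin (x/2))).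

Lemma Mpos : 0 < M.
Proof. unfold M. pose proof (pos_INR N). lra. Qed.

Lemma sigpos : 0 < sig.
Proof. unfold sig. apply sin_gt_0; lra. Qed.

Lemma int_props x : lo <= x <= hi -> 0 < x < 2 * PI /\ Rabs (x - PI) <= PI /\ sig <= sin (x/2).
Proof.
  intros Hx. pose proof PI_RGT_0 as Hpi.
  assert (lo <= PI <= hi) by (unfold lo, hi; split; [apply Rmin_r|apply Rmax_r]).
  assert (0 < lo) by (unfold lo; apply Rmin_glb_lt; lra).
  assert (hi < 2 * PI) by (unfold hi; apply Rmax_lub_lt; lra).
  split; [lra|split].
  - apply Rabs_le; lra.
  - apply sin_half_bound; auto.
Qed.

Lemma dE x : is_derive E x (E1 x).
Proof.
  unfold E, E1. apply (is_derive_plus (fun y => sumN _ N) (fun y => (y - PI)^2/4)).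
  - apply (is_derive_sumN (fun n y => (cos (INR n * PI) - cos (INR n * y)) / INR n ^ 2)
                          (fun n y => sin (INR n * y) / INR n)).
    intros n Hn. assert (INR n <> 0) by (apply not_0_INR; lia).
    auto_derive; auto. field; auto.
  - auto_derive; auto. simpl. field.
Qed.

Lemma dE1 x : is_derive E1 x (/2 + sumN (fun n => cos (INR n * x)) N).
Proof.
  unfold E1. eapply is_derive_ext with (f := fun y => sumN (fun n => sin (INR n * y) / INR n) N + (y - PI)/2).
  { intros; reflexivity. }
  replace (/2 + sumN (fun n => cos (INR n * x)) N) with (plus (sumN (fun n => cos (INR n * x)) N) (/2)) by (unfold plus; simpl; ring).
  apply (is_derive_plus (fun y => sumN _ N) (fun y => (y - PI)/2)).
  - apply (is_derive_sumN (fun n y => sin (INR n * y) / INR n) (fun n y => cos (INR n * y))).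
    intros n Hn. assert (INR n <> 0) by (apply not_0_INR; lia).
    auto_derive; auto. field; auto.
  - auto_derive; auto. field.
Qed.

Lemma dG x : sin (x/2) <> 0 ->
  is_derive G x (- cos (M * x) * cos (x/2) / (4 * M * sin (x/2) ^ 2)).
Proof.
  intros Hx. pose proof Mpos.
  unfold G.
  replace (- cos (M * x) * cos (x/2) / (4 * M * sin (x/2) ^ 2)) with
    (plus (/2 + sumN (fun n => cos (INR n * x)) N)
       (- cos (M * x) * cos (x/2) / (4 * M * sin (x/2) ^ 2) - (/2 + sumN (fun n => cos (INR n * x)) N))) by (unfold plus; simpl; ring).
  apply (is_derive_plus E1 (fun y => cos (M * y) / (M * (2 * sin (y/2))))).
  - apply dE1.
  - rewrite dirichlet by auto. fold M.
    auto_derive.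
    + replace (x * /2) with (x/2) by (unfold Rdiv; ring).
      apply Rmult_integral_contrapositive_currified; [lra|].
      apply Rmult_integral_contrapositive_currified; [lra|auto].
    + replace (x * /2) with (x/2) by (unfold Rdiv; ring).
      field. repeat split; try lra; auto.
Qed.


Lemma frac_bound a c d : Rabs a <= 1 -> 0 < d <= c -> Rabs (a / c) <= / d.
Proof.
  intros Ha Hd. unfold Rdiv. rewrite Rabs_mult, Rabs_inv, (Rabs_pos_eq c) by lra.
  apply Rle_trans with (1 * / c).
  - apply Rmult_le_compat_r; [left; apply Rinv_0_lt_compat; lra|auto].
  - rewrite Rmult_1_l. apply Rinv_le_contravar; lra.
Qed.

Lemma EPI : E PI = 0.
Proof.
  unfold E. rewrite (sumN_ext _ (fun _ => 0)). rewrite sumN_zero. field.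
  intros n _. unfold Rdiv. rewrite Rminus_diag. ring.
Qed.

Lemma GPI : G PI = 0.
Proof.
  unfold G, E1. rewrite (sumN_ext _ (fun _ => 0)). rewrite sumN_zero.
  - replace (M * PI) with (INR N * PI + PI/2) by (unfold M; field).
    rewrite cos_plus, cos_PI2, sin_PI2, sin_nPI. unfold Rdiv. ring.
  - intros n _. rewrite sin_nPI. unfold Rdiv. ring.
Qed.

Lemma E_bound : Rabs (E s) <= PI * (PI / (4 * M * sig^2) + / (2 * M * sig)).
Proof.
  pose proof Mpos as HM. pose proof sigpos as Hsig. pose proof PI_RGT_0 as Hpi.
  assert (Hsx : forall x, lo <= x <= hi -> 0 < sin (x/2)) by
    (intros x Hx; destruct (int_props x Hx) as [_ [_ H]]; lra).
  assert (HG : forall x, lo <= x <= hi -> Rabs (G x) <= / (4 * M * sig^2) * PI).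
  { intros x Hx. replace (G x) with (G x - G PI) by (rewrite GPI; ring).
    apply Rle_trans with (/ (4 * M * sig^2) * Rabs (x - PI)).
    - apply (lip G (fun y => - cos (M * y) * cos (y/2) / (4 * M * sin (y/2) ^ 2)) lo hi).
      + intros y Hy. apply dG. specialize (Hsx y Hy). lra.
      + intros y Hy. destruct (int_props y Hy) as [_ [_ Hb]].
        apply frac_bound.
        * rewrite Rabs_mult, Rabs_Ropp. pose proof (COS_bound (M*y)). pose proof (COS_bound (y/2)).
          assert (Rabs (cos (M*y)) <= 1) by (apply Rabs_le; lra).
          assert (Rabs (cos (y/2)) <= 1) by (apply Rabs_le; lra).
          pose proof (Rabs_pos (cos (M*y))). pose proof (Rabs_pos (cos (y/2))). nra.
        * split; [apply Rmult_lt_0_compat; [lra| apply pow_lt; lra]|].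
          apply Rmult_le_compat_l; [lra|]. simpl. nra.
      + auto.
      + unfold lo, hi. split; [apply Rmin_r|apply Rmax_r].
    - apply Rmult_le_compat_l. left; apply Rinv_0_lt_compat. apply Rmult_lt_0_compat; [lra|apply pow_lt; lra].
      destruct (int_props x Hx) as [_ [H _]]. auto. }
  assert (HE1 : forall x, lo <= x <= hi -> Rabs (E1 x) <= PI / (4 * M * sig^2) + / (2 * M * sig)).
  { intros x Hx. replace (E1 x) with (G x - cos (M * x) / (M * (2 * sin (x/2)))) by (unfold G; ring).
    eapply Rle_trans; [apply Rabs_triang|]. rewrite Rabs_Ropp.
    apply Rplus_le_compat.
    - specialize (HG x Hx). unfold Rdiv. lra.
    - apply frac_bound.
      + pose proof (COS_bound (M*x)). apply Rabs_le; lra.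
      + destruct (int_props x Hx) as [_ [_ Hb]]. split; [nra|]. nra. }
  replace (E s) with (E s - E PI) by (rewrite EPI; ring).
  assert (Hs_in : lo <= s <= hi) by (unfold lo, hi; split; [apply Rmin_l|apply Rmax_l]).
  eapply Rle_trans.
  - apply (lip E E1 lo hi).
    + intros; apply dE.
    + apply HE1.
    + auto.
    + unfold lo, hi. split; [apply Rmin_r|apply Rmax_r].
  - rewrite (Rmult_comm PI). apply Rmult_le_compat_l.
    + assert (0 < 4 * M * sig^2) by (apply Rmult_lt_0_compat; [lra|apply pow_lt; lra]).
      apply Rplus_le_le_0_compat.
      * unfold Rdiv; apply Rmult_le_pos; [lra|left; apply Rinv_0_lt_compat; auto].
      * left; apply Rinv_0_lt_compat; nra.
    + destruct (int_props s Hs_in) as [_ [H _]]. auto.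
Qed.

End LemA.

Lemma lemA s : 0 < s < 2 * PI ->
  Un_cv (fun N => sumN (fun n => (cos (INR n * PI) - cos (INR n * s)) / INR n ^ 2) N)
        (- (s - PI)^2 / 4).
Proof.
  intros Hs eps Heps.
  pose proof (sigpos s Hs) as Hsig. cbv zeta in Hsig.
  pose proof PI_RGT_0 as Hpi.
  set (sg := sin (s/2)) in *.
  set (K := PI * (PI / (4 * sg^2) + / (2 * sg))).
  assert (HK : 0 <= K).
  { unfold K. assert (0 < sg^2) by (apply pow_lt; lra).
    apply Rmult_le_pos; [lra|]. apply Rplus_le_le_0_compat.
    - unfold Rdiv; apply Rmult_le_pos; [lra|left; apply Rinv_0_lt_compat; lra].
    - left; apply Rinv_0_lt_compat; lra. }
  destruct (nat_unbounded (K / eps)) as [n0 Hn0].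
  exists n0. intros n Hn. unfold Rdist.
  pose proof (E_bound s Hs n) as Hb. cbv zeta in Hb. fold sg in Hb.
  assert (Hr : forall a b : R, a - - b / 4 = a + b / 4) by (intros; field). rewrite Hr.
  assert (HM : INR n0 <= INR n) by (apply le_INR; lia).
  set (M := INR n + /2) in *.
  assert (0 < M) by (unfold M; pose proof (pos_INR n); lra).
  assert (Heq : PI * (PI / (4 * M * sg ^ 2) + / (2 * M * sg)) = K / M).
  { unfold K. field. lra. }
  rewrite Heq in Hb. eapply Rle_lt_trans; [apply Hb|].
  apply (Rmult_lt_reg_r M); [lra|]. unfold Rdiv. rewrite Rmult_assoc, Rinv_l by lra.
  rewrite Rmult_1_r.
  assert (K < eps * M).
  { assert (K / eps < M) by (unfold M; lra).
    apply (Rmult_lt_compat_l eps) in H0; [|lra]. unfold Rdiv in H0.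
    replace (eps * (K * / eps)) with K in H0 by (field; lra). lra. }
  lra.
Qed.

Definition h (N : nat) (s : R) := sumN (fun n => (1 - cos (INR n * s)) / INR n ^ 2) N.

Lemma sin2_le u : 0 <= u -> sin u ^ 2 <= u ^ 2.
Proof.
  intros Hu. destruct (Rle_dec u PI) as [H|H].
  - pose proof (sin_ge_0 u Hu H). destruct (Req_dec u 0) as [->|Hn].
    + rewrite sin_0. lra.
    + pose proof (sin_lt_x u). assert (sin u < u) by (apply H1; lra). nra.
  - pose proof (SIN_bound u). pose proof PI_RGT_0. pose proof PI_4.
    pose proof (PI2_3_2). assert (1 < u) by lra. nra.
Qed.

Lemma one_m_cos_le y : 0 <= y -> 1 - cos y <= y ^ 2 / 2.
Proof.
  intros Hy. replace y with (2 * (y/2)) at 1 by field. rewrite cos_2a_sin.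
  pose proof (sin2_le (y/2)). simpl in H. assert (0 <= y/2) by lra. specialize (H H0). nra.
Qed.

Lemma term_nonneg n s : 0 <= (1 - cos (INR n * s)) / INR n ^ 2.
Proof.
  unfold Rdiv. apply Rmult_le_pos. pose proof (COS_bound (INR n * s)). lra.
  destruct (Req_dec (INR n) 0) as [H|H].
  - rewrite H. simpl. rewrite Rmult_0_l, Rinv_0. lra.
  - left. apply Rinv_0_lt_compat. apply pow_lt. pose proof (pos_INR n). lra.
Qed.

Lemma term_small n s : (1 <= n)%nat -> 0 <= s -> (1 - cos (INR n * s)) / INR n ^ 2 <= s ^ 2 / 2.
Proof.
  intros Hn Hs. assert (1 <= INR n) by (apply (le_INR 1); auto).
  pose proof (one_m_cos_le (INR n * s)). assert (0 <= INR n * s) by nra.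
  specialize (H0 H1). apply (Rmult_le_reg_r (INR n ^ 2)). apply pow_lt; lra.
  unfold Rdiv. rewrite Rmult_assoc, Rinv_l by (apply pow_nonzero; lra). nra.
Qed.

Lemma term_tail n s : (2 <= n)%nat -> (1 - cos (INR n * s)) / INR n ^ 2 <= 2 / (INR n - 1) - 2 / INR n.
Proof.
  intros Hn. assert (2 <= INR n) by (apply (le_INR 2); auto).
  pose proof (COS_bound (INR n * s)).
  apply Rle_trans with (2 / INR n ^ 2).
  - unfold Rdiv. apply Rmult_le_compat_r; [|lra]. left; apply Rinv_0_lt_compat, pow_lt; lra.
  - replace (2 / (INR n - 1) - 2 / INR n) with (2 / (INR n * (INR n - 1))) by (field; lra).
    apply Rmult_le_compat_l; [lra|]. apply Rinv_le_contravar. nra. simpl. nra.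
Qed.

Lemma h_le1 N s : 0 <= s -> h N s <= INR N * s ^ 2 / 2.
Proof.
  intros Hs. unfold h. induction N; cbn [sumN].
  - simpl. lra.
  - pose proof (term_small (S N) s ltac:(lia) Hs). cbv beta. rewrite S_INR in *. lra.
Qed.

Lemma h_tail K d s : (1 <= K)%nat -> h (K + d) s <= h K s + 2 / INR K - 2 / INR (K + d).
Proof.
  intros HK. induction d.
  - rewrite Nat.add_0_r. lra.
  - replace (K + S d)%nat with (S (K + d)) by lia. unfold h in *. cbn [sumN].
    pose proof (term_tail (S (K + d)) s ltac:(lia)). cbv beta. rewrite S_INR in *.
    replace (INR (K + d) + 1 - 1) with (INR (K + d)) in H by ring. lra.
Qed.

Lemma h_bound K N s : (1 <= K)%nat -> 0 <= s -> h N s <= INR K * s ^ 2 / 2 + 2 / INR K.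
Proof.
  intros HK Hs. assert (1 <= INR K) by (apply (le_INR 1); auto).
  assert (0 < 2 / INR K) by (unfold Rdiv; apply Rmult_lt_0_compat; [lra|apply Rinv_0_lt_compat; lra]).
  destruct (Nat.le_gt_cases N K) as [H1|H1].
  - pose proof (h_le1 N s Hs). assert (INR N <= INR K) by (apply le_INR; auto).
    assert (0 <= s^2) by (apply pow_le; lra). nra.
  - replace N with (K + (N - K))%nat by lia. pose proof (h_tail K (N - K) s HK).
    pose proof (h_le1 K s Hs).
    assert (0 < 2 / INR (K + (N - K))).
    { unfold Rdiv; apply Rmult_lt_0_compat; [lra|apply Rinv_0_lt_compat].
      apply lt_0_INR; lia. }
    lra.
Qed.

Lemma h_nonneg N s : 0 <= h N s.
Proof.
  unfold h. induction N; cbn [sumN]; cbv beta; [lra|]. pose proof (term_nonneg (S N) s). lra.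
Qed.

Lemma cv_const c : Un_cv (fun _ => c) c.
Proof. intros e He. exists 0%nat. intros. unfold Rdist. rewrite Rminus_diag, Rabs_R0. lra. Qed.

Lemma h_split N s : h N s = h N PI + sumN (fun n => (cos (INR n * PI) - cos (INR n * s)) / INR n ^ 2) N.
Proof.
  unfold h. rewrite <- sumN_plus. apply sumN_ext. intros n Hn.
  assert (INR n <> 0) by (apply not_0_INR; lia). field. auto.
Qed.

Lemma cv_ext (u v : nat -> R) l l' : (forall n, u n = v n) -> l = l' -> Un_cv u l -> Un_cv v l'.
Proof. intros H <- Hu e He. destruct (Hu e He) as [N HN]. exists N. intros n Hn. rewrite <- H. auto. Qed.

Lemma basel_C : Un_cv (fun N => h N PI) (PI ^ 2 / 4).
Proof.
  destruct (growing_cv (fun N => h N PI)) as [C HC].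
  - intros N. unfold h. cbn [sumN]. pose proof (term_nonneg (S N) PI). lra.
  - exists (INR 1 * PI ^ 2 / 2 + 2 / INR 1). intros x [N ->]. apply h_bound; [lia|].
    left; apply PI_RGT_0.
  - assert (Hs : forall s, 0 < s < 2 * PI -> Un_cv (fun N => h N s) (C - (s - PI)^2/4)).
    { intros s Hs. eapply cv_ext.
      3: apply (CV_plus _ _ _ _ HC (lemA s Hs)).
      intros; rewrite h_split; reflexivity. field. }
    pose proof PI_RGT_0 as Hpi. pose proof PI_4 as Hpi4. pose proof PI2_3_2 as Hpi3.
    assert (Hlo : forall s, 0 < s < 2 * PI -> 0 <= C - (s - PI)^2/4).
    { intros s Hs1. apply Rle_cv_lim with (Un := fun _ => 0) (Vn := fun N => h N s); auto.
      - intros; apply h_nonneg.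
      - apply cv_const. }
    assert (Hhi : forall s K, 0 < s < 2 * PI -> (1 <= K)%nat -> C - (s - PI)^2/4 <= INR K * s ^ 2 / 2 + 2 / INR K).
    { intros s K Hs1 HK. apply Rle_cv_lim with (Un := fun N => h N s) (Vn := fun _ => INR K * s ^ 2 / 2 + 2 / INR K); auto.
      - intros; apply h_bound; [auto|lra].
      - apply cv_const. }
    assert (C = PI ^ 2 / 4).
    { apply Rle_antisym.
      - apply Rnot_lt_le. intros Hc. set (d := C - PI^2/4).
        destruct (nat_unbounded (4 / d)) as [K0 HK0].
        set (K := S K0). assert (HK : (1 <= K)%nat) by (unfold K; lia).
        assert (Hk1 : 1 <= INR K) by (apply (le_INR 1); auto).
        assert (Hkd : 4 / d < INR K) by (unfold K; rewrite S_INR; lra).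
        assert (Hdk : 4 < d * INR K).
        { apply (Rmult_lt_compat_l d) in Hkd; [|unfold d; lra].
          replace (d * (4 / d)) with 4 in Hkd by (field; unfold d; lra). lra. }
        set (s := / INR K).
        assert (Hsk : s * INR K = 1) by (unfold s; field; lra).
        assert (Hs0 : 0 < s) by (unfold s; apply Rinv_0_lt_compat; lra).
        assert (Hs1 : s <= 1) by nra.
        specialize (Hhi s K ltac:(lra) HK).
        replace (2 / INR K) with (2 * s) in Hhi by (unfold s; field; lra).
        clearbody s K. replace (INR K * s ^ 2 / 2) with ((s * INR K) * s / 2) in Hhi by field. rewrite Hsk in Hhi.
        unfold d in Hdk. nra.
      - apply Rnot_lt_le. intros Hc. set (d := PI^2/4 - C).
        set (s := Rmin 1 (d / PI)).
        assert (Hs0 : 0 < s) by (unfold s; apply Rmin_glb_lt; [lra|unfold Rdiv; apply Rmult_lt_0_compat; [unfold d; lra|apply Rinv_0_lt_compat; lra]]).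
        assert (Hs1 : s <= 1) by (unfold s; apply Rmin_l).
        assert (Hs2 : PI * s <= d).
        { assert (s <= d / PI) by (unfold s; apply Rmin_r).
          apply (Rmult_le_compat_l PI) in H; [|lra]. replace (PI * (d / PI)) with d in H by (field; lra). lra. }
        specialize (Hlo s ltac:(lra)). unfold d in Hs2. nra. }
    subst C. auto.
Qed.

Lemma lemH s : 0 <= s < 2 * PI -> Un_cv (fun N => h N s) (PI ^ 2 / 4 - (s - PI) ^ 2 / 4).
Proof.
  intros Hs. destruct (Req_dec s 0) as [->|Hn].
  - eapply cv_ext; [| |apply (cv_const 0)].
    + intros N. unfold h. rewrite (sumN_ext _ (fun _ => 0)). now rewrite sumN_zero.
      intros n Hn. rewrite Rmult_0_r, cos_0. field. apply not_0_INR; lia.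
    + field.
  - eapply cv_ext; [| |apply (CV_plus _ _ _ _ basel_C (lemA s ltac:(lra)))].
    + intros; rewrite h_split; reflexivity.
    + field.
Qed.

Lemma abs_sq x : Rabs x ^ 2 = x ^ 2.
Proof.
  simpl. rewrite !Rmult_1_r. destruct (Rcase_abs x) as [H|H].
  - rewrite Rabs_left by auto. nra.
  - rewrite Rabs_right by auto. nra.
Qed.

Lemma term_eq zeta P theta b alpha n :
  0 < theta -> 0 < zeta -> 0 < P -> / theta = INR b + alpha ->
  interf_term zeta P theta n =
  zeta * P * theta ^ 2 / PI ^ 2 * ((1 - cos (INR (S n) * (2 * PI * alpha))) / INR (S n) ^ 2).
Proof.
  intros Ht Hz HP Hb. pose proof PI_RGT_0 as Hpi.
  unfold interf_term, gch. rewrite !abs_sq. rewrite opp_IZR, <- INR_IZR_INZ.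
  set (m := INR (S n)). assert (Hm : 0 < m) by (apply lt_0_INR; lia).
  assert (Hy : m / theta <> 0) by (unfold Rdiv; apply Rmult_integral_contrapositive_currified;
     [lra| apply Rinv_neq_0_compat; lra]).
  assert (Hy' : - m / theta <> 0) by (unfold Rdiv in *; rewrite <- Ropp_mult_distr_l; lra).
  unfold sinc. destruct (Req_EM_T (m / theta) 0) as [e|_]; [contradiction|].
  destruct (Req_EM_T (- m / theta) 0) as [e|_]; [contradiction|].
  replace (PI * (- m / theta)) with (- (PI * (m / theta))) by (field; lra).
  rewrite sin_neg.
  set (a := PI * (m / theta)).
  assert (Hc : cos (2 * a) = cos (m * (2 * PI * alpha))).
  { replace (2 * a) with (m * (2 * PI * alpha) + 2 * INR (S n * b) * PI).
    - apply cos_period.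
    - unfold a. rewrite mult_INR. fold m. unfold Rdiv. rewrite Hb. field. }
  rewrite cos_2a_sin in Hc. rewrite <- Hc.
  assert (a <> 0) by (unfold a; apply Rmult_integral_contrapositive_currified; lra).
  unfold a. field. repeat split; try lra.
Qed.

Theorem mainTheorem4 (theta zeta P N0 : R)
  (Htheta : 0 < theta) (Hzeta : 0 < zeta) (HP : 0 < P) :
  let beta := floorR (/ theta) in
  let alpha := / theta - beta in
  exists I : R,
    infinite_sum (interf_term zeta P theta) I /\
    I = zeta * P * (theta ^ 2 * (beta ^ 2 + 2 * alpha * beta + alpha) - 1) /\
    ln (1 + zeta * P / (N0 + I)) =
      ln (1 + zeta * P /
            (N0 + zeta * P * (theta ^ 2 * (beta ^ 2 + 2 * alpha * beta + alpha) - 1))) /\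
    ((exists k : Z, / theta = IZR k) -> I = 0).
Proof.
  intros beta alpha. pose proof PI_RGT_0 as Hpi.
  pose proof (base_Int_part (/ theta)) as [Hf1 Hf2].
  assert (Hit : 0 < / theta) by (apply Rinv_0_lt_compat; lra).
  assert (Hz0 : (0 <= Int_part (/ theta))%Z).
  { assert (-1 < IZR (Int_part (/ theta))) by lra. apply lt_IZR in H. lia. }
  set (b := Z.to_nat (Int_part (/ theta))).
  assert (Hbeta : beta = INR b).
  { unfold beta, floorR, b. rewrite INR_IZR_INZ, Z2Nat.id; auto. }
  assert (Ha0 : 0 <= alpha < 1) by (unfold alpha, beta, floorR; lra).
  assert (Hb : / theta = INR b + alpha) by (unfold alpha; rewrite Hbeta; ring).
  set (c := zeta * P * theta ^ 2 / PI ^ 2).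
  set (s := 2 * PI * alpha).
  assert (HI : c * (PI ^ 2 / 4 - (s - PI) ^ 2 / 4) =
               zeta * P * (theta ^ 2 * (beta ^ 2 + 2 * alpha * beta + alpha) - 1)).
  { unfold c, s, alpha. field. lra. }
  exists (zeta * P * (theta ^ 2 * (beta ^ 2 + 2 * alpha * beta + alpha) - 1)).
  split; [|split; [reflexivity|split; [reflexivity|]]].
  - rewrite <- HI. intros eps Heps.
    assert (Hcv : Un_cv (fun N => c * h (S N) s) (c * (PI ^ 2 / 4 - (s - PI) ^ 2 / 4))).
    { apply CV_mult. apply cv_const.
      pose proof (CV_shift' (fun N => h N s) 1 _ (lemH s ltac:(unfold s; split; nra))) as H.
      eapply cv_ext; [|reflexivity|apply H]. intros n. simpl. rewrite Nat.add_1_r. reflexivity. }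
    destruct (Hcv eps Heps) as [N HN]. exists N. intros n Hn.
    replace (sum_f_R0 (interf_term zeta P theta) n) with (c * h (S n) s); [apply HN; auto|].
    set (f := fun m => c * ((1 - cos (INR m * s)) / INR m ^ 2)).
    rewrite (sum_eq _ (fun i => f (S i))).
    + rewrite sum_f_R0_sumN. unfold f, h. rewrite sumN_scal. reflexivity.
    + intros i _. unfold f. rewrite (term_eq zeta P theta b alpha i); auto.
  - intros [k Hk]. rewrite <- HI.
    assert (Hk' : Int_part (/ theta) = k).
    { symmetry. apply Int_part_spec. rewrite Hk. lra. }
    assert (alpha = 0).
    { unfold alpha, beta, floorR. rewrite Hk', Hk. ring. }
    unfold s. rewrite H. field.
Qed.
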